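(* Let $n\ge 2r$. Let $\bm{U}_r,\bm{V}_r\in\mathbb{R}^{n\times r}$ have orthonormal columns spanning the column and row spaces of a rank-$r$ matrix $\bm{X}^\star\in\mathbb{R}^{n\times n}$, and let $\widetilde{\bm{U}}_r,\widetilde{\bm{V}}_r\in\mathbb{R}^{n\times r}$ have orthonormal columns. Let $\bm{U}_r^T\widetilde{\bm{U}}_r=\bm{L}_L\cos(\bm{\Gamma})\bm{R}_L^T$ and $\bm{V}_r^T\widetilde{\bm{V}}_r=\bm{L}_R\cos(\bm{H})\bm{R}_R^T$ be SVDs, with $\bm{L}_L,\bm{R}_L,\bm{L}_R,\bm{R}_R\in\mathbb{R}^{r\times r}$ orthogonal and $\bm{\Gamma}=\mathrm{diag}(\gamma_1,\dots,\gamma_r)$, $\bm{H}=\mathrm{diag}(\eta_1,\dots,\eta_r)$ the diagonal matrices of principal angles (in $[0,\pi/2]$) between $\mathrm{span}(\bm{U}_r)$ and $\mathrm{span}(\widetilde{\bm{U}}_r)$, respectively between $\mathrm{span}(\bm{V}_r)$ and $\mathrm{span}(\widetilde{\bm{V}}_r)$. Define $$\bm{A}_{cc}=\bm{L}_L\cos(\bm{\Gamma})\bm{R}_L^T\bm{R}_R\cos(\bm{H})\bm{L}_R^T,\quad \bm{A}_{cs}=\bm{L}_L\cos(\bm{\Gamma})\bm{R}_L^T\bm{R}_R\sin(\bm{H})\bm{L}_R^T,$$ $$\bm{A}_{sc}=\bm{L}_L\sin(\bm{\Gamma})\bm{R}_L^T\bm{R}_R\cos(\bm{H})\bm{L}_R^T,\quad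 \bm{A}_{ss}=\bm{L}_L\sin(\bm{\Gamma})\bm{R}_L^T\bm{R}_R\sin(\bm{H})\bm{L}_R^T.$$ Let $\lambda\ge0$ and $\bm{W}_0=\bm{U}_r\bm{V}_r^T-\lambda\mathcal{P}_{\mathcal{T}}(\widetilde{\bm{U}}_r\widetilde{\bm{V}}_r^T)$. Then $$\|\bm{W}_0\|_F=\alpha_1,\quad \|\lambda\mathcal{P}_{\mathcal{T}^\perp}(\widetilde{\bm{U}}_r\widetilde{\bm{V}}_r^T)\|=\alpha_2,\quad \|\bm{W}_0\|_{\mu(\infty,2)}\le\alpha_3\beta,\quad \|\bm{W}_0\|_{\mu(\infty)}\le\alpha_3\beta,$$ where $$\alpha_1^2=\|\bm{I}_r-\lambda\bm{A}_{cc}\|_F^2+\|\lambda\bm{A}_{cs}\|_F^2+\|\lambda\bm{A}_{sc}\|_F^2,\quad \alpha_2=\|\lambda\bm{A}_{ss}\|,$$ $$\alpha_3=\|\bm{I}_r-\lambda\bm{A}_{cc}\|+\|\lambda\bm{A}_{sc}\|+\|\lambda\bm{A}_{cs}\|,\quad \beta=1\vee\sqrt{2\max_i\frac{\breve{\mu}_i}{\mu_i}}\vee\sqrt{2\max_j\frac{\breve{\nu}_j}{\nu_j}}.$$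
   Context: Notation: $\|\cdot\|$ spectral norm, $\|\cdot\|_F$ Frobenius norm, $a\vee b=\max\{a,b\}$, $\bm{e}_i$ standard basis vectors; $\cos(\bm{\Gamma})=\mathrm{diag}(\cos\gamma_1,\dots,\cos\gamma_r)$ and similarly for $\sin$ and for $\bm{H}$. $\mathcal{P}_{\mathcal{T}}(\bm{X})=\bm{U}_r\bm{U}_r^T\bm{X}+\bm{X}\bm{V}_r\bm{V}_r^T-\bm{U}_r\bm{U}_r^T\bm{X}\bm{V}_r\bm{V}_r^T$, $\mathcal{P}_{\mathcal{T}^\perp}(\bm{X})=\bm{X}-\mathcal{P}_{\mathcal{T}}(\bm{X})$. Leverage scores: for a subspace $\mathcal{S}$ of dimension $d$ with orthonormal basis matrix $\bm{S}$, $\mu_i(\mathcal{S})=\frac{n}{d}\|\bm{S}^T\bm{e}_i\|_2^2$; $\mu_i=\mu_i(\mathrm{span}(\bm{U}_r))$, $\nu_j=\mu_j(\mathrm{span}(\bm{V}_r))$ (assumed positive), $\breve{\mu}_i=\mu_i(\mathrm{span}([\bm{U}_r,\widetilde{\bm{U}}_r]))$, $\breve{\nu}_j=\mu_j(\mathrm{span}([\bm{V}_r,\widetilde{\bm{V}}_r]))$. Norms: $\|\bm{X}\|_{\mu(\infty)}=\max_{i,j}\sqrt{\frac{n}{\mu_i r}}|X_{ij}|\sqrt{\frac{n}{\nu_j r}}$, $\|\bm{X}\|_{\mu(\infty,2)}=\max\{\max_i\sqrt{\frac{n}{\mu_i r}}\|\bm{X}^T\bm{e}_i\|_2,\max_j\sqrt{\frac{n}{\nu_j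 r}}\|\bm{X}\bm{e}_j\|_2\}$. *)

(* Defs.v *)
From HB Require Import structures.
From mathcomp Require Import all_boot all_order all_algebra.
From mathcomp Require Import all_classical all_reals all_analysis.
Set Implicit Arguments. Unset Strict Implicit. Unset Printing Implicit Defensive.
Import Order.TTheory GRing.Theory Num.Theory.
Local Open Scope ring_scope.
Local Open Scope classical_set_scope.

Definition vnorm {R : realType} {p : nat} (v : 'cV[R]_p) : R :=
  Num.sqrt (\sum_(i < p) v i 0 ^+ 2).

Definition specnorm {R : realType} {m p : nat} (A : 'M[R]_(m, p)) : R :=
  sup [set y : R | exists x : 'cV[R]_p, vnorm x <= 1 /\ y = vnorm (A *m x)].

Definition fnorm {R : realType} {m p : nat} (A : 'M[R]_(m, p)) : R :=
  Num.sqrt (\sum_(i < m) \sum_(j < p) A i j ^+ 2).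

Definition PT {R : realType} {n r : nat} (U V : 'M[R]_(n, r)) (X : 'M[R]_n) : 'M[R]_n :=
  U *m U^T *m X + X *m V *m V^T - U *m U^T *m X *m V *m V^T.
Definition PTperp {R : realType} {n r : nat} (U V : 'M[R]_(n, r)) (X : 'M[R]_n) : 'M[R]_n :=
  X - PT U V X.

Definition lev {R : realType} {n d : nat} (S : 'M[R]_(n, d)) (i : 'I_n) : R :=
  (n%:R / d%:R) * \sum_(k < d) S i k ^+ 2.

(* ||X||_{mu(infty)} with mu_i = lev U i, nu_j = lev V j *)
Definition mu_inf_norm {R : realType} {n r : nat} (U V : 'M[R]_(n, r)) (X : 'M[R]_n) : R :=
  \big[Num.max/0]_(i < n) \big[Num.max/0]_(j < n)
     (Num.sqrt (n%:R / (lev U i * r%:R)) * `|X i j| * Num.sqrt (n%:R / (lev V j * r%:R))).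

Definition mu_inf2_norm {R : realType} {n r : nat} (U V : 'M[R]_(n, r)) (X : 'M[R]_n) : R :=
  Num.max
    (\big[Num.max/0]_(i < n) (Num.sqrt (n%:R / (lev U i * r%:R)) * vnorm (X^T *m delta_mx i 0)))
    (\big[Num.max/0]_(j < n) (Num.sqrt (n%:R / (lev V j * r%:R)) * vnorm (X *m delta_mx j 0))).

Definition diag_of {R : realType} {r : nat} (f : R -> R) (g : 'I_r -> R) : 'M[R]_r :=
  diag_mx (\row_i f (g i)).

(* Main.v *)
Require Import Defs.
From HB Require Import structures.
From mathcomp Require Import all_boot all_order all_algebra.
From mathcomp Require Import all_classical all_reals all_analysis.
From mathcomp Require Import ring lra.
Import Order.TTheory GRing.Theory Num.Theory.
Local Open Scope ring_scope.
Set Implicit Arguments. Unset Strict Implicit. Unset Printing Implicit Defensive.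
Definition qf {R : realType} {p : nat} (x : 'cV[R]_p) : R := \sum_(i < p) x i 0 ^+ 2.
Definition dp {R : realType} {p : nat} (x y : 'cV[R]_p) : R := (x^T *m y) 0 0.

Lemma qf_dp (R : realType) p (x : 'cV[R]_p) : qf x = dp x x.
Proof. rewrite /qf /dp mxE; apply: eq_bigr => i _; by rewrite mxE expr2. Qed.

Lemma qf_ge0 (R : realType) p (x : 'cV[R]_p) : 0 <= qf x.
Proof. by apply: sumr_ge0 => i _; exact: sqr_ge0. Qed.

Lemma vnorm_ge0 (R : realType) p (x : 'cV[R]_p) : 0 <= vnorm x.
Proof. exact: sqrtr_ge0. Qed.

Lemma vnorm_sq (R : realType) p (x : 'cV[R]_p) : vnorm x ^+ 2 = qf x.
Proof. by rewrite /vnorm sqr_sqrtr // qf_ge0. Qed.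

Lemma vnormE (R : realType) p (x : 'cV[R]_p) : vnorm x = Num.sqrt (qf x).
Proof. by []. Qed.

Lemma qf_eq0 (R : realType) p (x : 'cV[R]_p) : qf x = 0 -> x = 0.
Proof.
move=> /eqP; rewrite psumr_eq0 => [/allP H|i _]; last exact: sqr_ge0.
apply/matrixP => i j; rewrite ord1 mxE.
by have := H i (mem_index_enum _); rewrite /= sqrf_eq0 => /eqP.
Qed.

Lemma vnorm_eq0 (R : realType) p (x : 'cV[R]_p) : vnorm x = 0 -> x = 0.
Proof. move=> h; apply: qf_eq0; by rewrite -vnorm_sq h expr0n. Qed.

Lemma dpC (R : realType) p (x y : 'cV[R]_p) : dp x y = dp y x.
Proof. rewrite /dp !mxE; apply: eq_bigr => i _; by rewrite !mxE mulrC. Qed.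

Lemma dpDl (R : realType) p (x y z : 'cV[R]_p) : dp (x + y) z = dp x z + dp y z.
Proof. by rewrite /dp linearD /= mulmxDl mxE. Qed.

Lemma dpZl (R : realType) p a (x z : 'cV[R]_p) : dp (a *: x) z = a * dp x z.
Proof. by rewrite /dp linearZ /= -scalemxAl mxE. Qed.

Lemma dpNl (R : realType) p (x z : 'cV[R]_p) : dp (- x) z = - dp x z.
Proof. by rewrite -scaleN1r dpZl mulN1r. Qed.

Lemma dpDr (R : realType) p (x y z : 'cV[R]_p) : dp z (x + y) = dp z x + dp z y.
Proof. by rewrite dpC dpDl !(dpC z). Qed.

Lemma dpZr (R : realType) p a (x z : 'cV[R]_p) : dp z (a *: x) = a * dp z x.
Proof. by rewrite dpC dpZl dpC. Qed.

Lemma dpNr (R : realType) p (x z : 'cV[R]_p) : dp z (- x) = - dp z x.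
Proof. by rewrite dpC dpNl dpC. Qed.

Lemma CS (R : realType) p (x y : 'cV[R]_p) : dp x y <= vnorm x * vnorm y.
Proof.
have [hx|hx] := eqVneq (vnorm x) 0.
  by rewrite (vnorm_eq0 hx) /dp trmx0 mul0mx mxE mulr_ge0 // vnorm_ge0.
have [hy|hy] := eqVneq (vnorm y) 0.
  by rewrite (vnorm_eq0 hy) /dp mulmx0 mxE mulr_ge0 // vnorm_ge0.
set a := vnorm x; set b := vnorm y.
have ha : 0 < a by rewrite lt_def hx vnorm_ge0.
have hb : 0 < b by rewrite lt_def hy vnorm_ge0.
have := qf_ge0 (b *: x - a *: y).
rewrite qf_dp !(dpDl, dpDr, dpZl, dpZr, dpNl, dpNr) -!qf_dp -!vnorm_sq (dpC y x) -/a -/b.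
move=> h.
have h2 : 0 <= 2 * a * b * (a * b - dp x y) by nra.
rewrite -subr_ge0; move: h2; rewrite pmulr_rge0 // !mulr_gt0 //.
Qed.

Lemma CS_abs (R : realType) p (x y : 'cV[R]_p) : `|dp x y| <= vnorm x * vnorm y.
Proof.
have h1 := CS x y; have h2 := CS (- x) y.
have e : vnorm (- x) = vnorm x.
  by rewrite !vnormE !qf_dp dpNl dpNr opprK.
rewrite e dpNl in h2; rewrite ler_norml h1 andbT; lra.
Qed.

Lemma qfD (R : realType) p (x y : 'cV[R]_p) : qf (x + y) = qf x + 2 * dp x y + qf y.
Proof. rewrite !qf_dp dpDl !dpDr (dpC y x); ring. Qed.

Lemma vnorm_triangle (R : realType) p (x y : 'cV[R]_p) : vnorm (x + y) <= vnorm x + vnorm y.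
Proof.
rewrite {1}vnormE -(@ger0_norm _ (vnorm x + vnorm y)); last by rewrite addr_ge0 // vnorm_ge0.
rewrite -sqrtr_sqr ler_sqrt; last by rewrite sqr_ge0.
rewrite qfD sqrrD -!vnorm_sq; have := CS x y; lra.
Qed.

Lemma vnormN (R : realType) p (x : 'cV[R]_p) : vnorm (- x) = vnorm x.
Proof. by rewrite !vnormE !qf_dp dpNl dpNr opprK. Qed.

Lemma vnormZ (R : realType) p a (x : 'cV[R]_p) : vnorm (a *: x) = `|a| * vnorm x.
Proof.
by rewrite !vnormE !qf_dp dpZl dpZr mulrA -expr2 sqrtrM ?sqr_ge0 // sqrtr_sqr.
Qed.

Lemma vnorm_sub (R : realType) p (x y : 'cV[R]_p) : vnorm (x - y) <= vnorm x + vnorm y.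
Proof. by rewrite -(vnormN y) vnorm_triangle. Qed.

Lemma dp_mul (R : realType) p q (A : 'M[R]_(p, q)) x y : dp x (A *m y) = dp (A^T *m x) y.
Proof. by rewrite /dp trmx_mul trmxK mulmxA. Qed.

Lemma qf_mul (R : realType) p q (A : 'M[R]_(p, q)) x : qf (A *m x) = dp x ((A^T *m A) *m x).
Proof. by rewrite qf_dp dpC dp_mul mulmxA. Qed.

Lemma vnorm_isom (R : realType) p q (A : 'M[R]_(p, q)) x : A^T *m A = 1%:M -> vnorm (A *m x) = vnorm x.
Proof. by move=> h; rewrite !vnormE qf_mul h mul1mx qf_dp. Qed.

Lemma qf_proj (R : realType) p (P : 'M[R]_p) x : P^T = P -> P *m P = P -> qf (P *m x) <= qf x.
Proof.
move=> hs hi.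
have -> : qf x = qf (P *m x + (x - P *m x)) by rewrite addrC subrK.
rewrite qfD.
have -> : dp (P *m x) (x - P *m x) = 0.
  by rewrite dpC dp_mul hs mulmxBr mulmxA hi subrr /dp trmx0 mul0mx mxE.
by rewrite mulr0 addr0 lerDl qf_ge0.
Qed.

Lemma dp_proj (R : realType) p (P : 'M[R]_p) x : P^T = P -> P *m P = P -> dp x (P *m x) = qf (P *m x).
Proof. by move=> hs hi; rewrite qf_mul hs hi. Qed.

Lemma trTT_eq0 (R : realType) p q (A : 'M[R]_(p, q)) : A^T *m A = 0 -> A = 0.
Proof.
move=> h; apply/matrixP => i j.
have : qf (A *m delta_mx j 0) = 0 by rewrite qf_mul h mul0mx /dp mulmx0 mxE.
move/qf_eq0/matrixP/(_ i 0); rewrite !mxE => <-.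
rewrite (bigD1 j) //= mxE !eqxx mulr1 big1 ?addr0 // => k hk.
by rewrite mxE (negPf hk) mulr0.
Qed.
Local Open Scope classical_set_scope.

Lemma row_dp (R : realType) p q (A : 'M[R]_(p, q)) x i : (A *m x) i 0 = dp (row i A)^T x.
Proof. rewrite /dp trmxK !mxE; apply: eq_bigr => j _; by rewrite !mxE. Qed.

Lemma spec_bound (R : realType) p q (A : 'M[R]_(p, q)) :
  exists K, 0 <= K /\ forall x, qf (A *m x) <= K * qf x.
Proof.
exists (\sum_(i < p) qf (row i A)^T); split; first by apply: sumr_ge0 => i _; exact: qf_ge0.
move=> x; rewrite mulr_suml [X in X <= _]/qf; apply: ler_sum => i _.
rewrite row_dp -!vnorm_sq -exprMn.
have h := CS_abs (row i A)^T x; have h0 := normr_ge0 (dp (row i A)^T x).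
rewrite -[dp _ _ ^+ 2]real_normK ?num_real //; nra.
Qed.

Definition specset (R : realType) p q (A : 'M[R]_(p, q)) :=
  [set y : R | exists x : 'cV[R]_q, vnorm x <= 1 /\ y = vnorm (A *m x)].

Lemma spec_hassup (R : realType) p q (A : 'M[R]_(p, q)) : has_sup (specset A).
Proof.
have v0 k : vnorm (0 : 'cV[R]_k) = 0.
  by rewrite /vnorm /qf big1 ?sqrtr0 // => i _; rewrite mxE expr0n.
split.
  exists 0; rewrite /specset /=; exists 0; split; [by rewrite v0 ler01 | by rewrite mulmx0 v0].
have [K [K0 hK]] := spec_bound A.
exists (Num.sqrt K) => y [x [hx ->]].
rewrite vnormE ler_sqrt //; apply: le_trans (hK x) _.
have h1 : qf x <= 1 by rewrite -vnorm_sq; have := vnorm_ge0 x; nra.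
have := qf_ge0 x; nra.
Qed.

Lemma v0 (R : realType) k : vnorm (0 : 'cV[R]_k) = 0.
Proof. by rewrite /vnorm /qf big1 ?sqrtr0 // => i _; rewrite mxE expr0n. Qed.

Lemma spec_ub (R : realType) p q (A : 'M[R]_(p, q)) x : vnorm x <= 1 -> vnorm (A *m x) <= specnorm A.
Proof.
move=> hx; have [_ hub] := spec_hassup A.
by apply: (ub_le_sup hub); exists x.
Qed.

Lemma spec_ge0 (R : realType) p q (A : 'M[R]_(p, q)) : 0 <= specnorm A.
Proof. by have := @spec_ub R p q A 0; rewrite mulmx0 !v0 ler01 => /(_ isT). Qed.

Lemma spec_mul (R : realType) p q (A : 'M[R]_(p, q)) x : vnorm (A *m x) <= specnorm A * vnorm x.
Proof.
have [hx|hx] := eqVneq (vnorm x) 0.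
  by rewrite (vnorm_eq0 hx) mulmx0 !v0 mulr_ge0 // ?spec_ge0 ?vnorm_ge0.
have ha : 0 < vnorm x by rewrite lt_def hx vnorm_ge0.
have := @spec_ub R p q A ((vnorm x)^-1 *: x).
rewrite vnormZ ger0_norm ?invr_ge0 ?vnorm_ge0 // mulVf // lexx -scalemxAr vnormZ.
rewrite ger0_norm ?invr_ge0 ?vnorm_ge0 // => /(_ isT).
by rewrite -(ler_pM2l ha) mulrA mulfV // mul1r mulrC.
Qed.

Lemma spec_le (R : realType) p q p' q' (A : 'M[R]_(p, q)) (B : 'M[R]_(p', q')) :
  (forall x, vnorm x <= 1 -> exists z, vnorm z <= 1 /\ vnorm (A *m x) <= vnorm (B *m z)) ->
  specnorm A <= specnorm B.
Proof.
move=> h; apply: ge_sup; first by have [] := spec_hassup A.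
move=> y [x [hx ->]]; have [z [hz hle]] := h x hx.
exact: le_trans hle (spec_ub B hz).
Qed.

Lemma spec_tr (R : realType) p q (A : 'M[R]_(p, q)) x : vnorm (A^T *m x) <= specnorm A * vnorm x.
Proof.
set w := A^T *m x.
have h : vnorm w ^+ 2 <= vnorm x * (specnorm A * vnorm w).
  rewrite vnorm_sq qf_dp {2}/w dpC -dp_mul.
  apply: le_trans (CS _ _) _; apply: ler_wpM2l; first exact: vnorm_ge0.
  exact: spec_mul.
have := vnorm_ge0 w; have := vnorm_ge0 x; have := spec_ge0 A.
have [hw|hw] := eqVneq (vnorm w) 0.
  by rewrite hw => *; rewrite mulr_ge0.
move=> h1 h2 h3.
have hp : 0 < vnorm w by rewrite lt_def hw h3.
rewrite expr2 in h; nra.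
Qed.


Definition dg {R : realType} {r : nat} (v : 'I_r -> R) : 'M[R]_r := diag_mx (\row_i v i).

Lemma dgM (R : realType) r (a b : 'I_r -> R) : dg a *m dg b = dg (fun i => a i * b i).
Proof. by rewrite /dg mulmx_diag; congr diag_mx; apply/matrixP => i j; rewrite !mxE. Qed.

Lemma dg_tr (R : realType) r (a : 'I_r -> R) : (dg a)^T = dg a.
Proof. exact: tr_diag_mx. Qed.

Lemma dg_ext (R : realType) r (a b : 'I_r -> R) : (forall i, a i = b i) -> dg a = dg b.
Proof. by move=> h; congr diag_mx; apply/matrixP => i j; rewrite !mxE h. Qed.

Lemma dg1 (R : realType) r : dg (fun _ : 'I_r => (1 : R)) = 1%:M.
Proof. by apply/matrixP => i j; rewrite !mxE. Qed.

Lemma dgB (R : realType) r (a b : 'I_r -> R) : dg a - dg b = dg (fun i => a i - b i).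
Proof. by apply/matrixP => i j; rewrite !mxE mulrnBl. Qed.

Lemma inv_id1 (R : realType) (x : R) : x^-1 * x * x^-1 = x^-1.
Proof. by have [->|h] := eqVneq x 0; rewrite ?invr0 ?mulr0 // mulVf ?mul1r. Qed.

Lemma inv_id2 (R : realType) (x : R) : x * x^-1 * x = x.
Proof. by have [->|h] := eqVneq x 0; rewrite ?mul0r // mulfV ?mul1r. Qed.

Lemma side_decomp (R : realType) n r (U Ut : 'M[R]_(n,r)) (LL RL : 'M[R]_r) (gam : 'I_r -> R) :
  U^T *m U = 1%:M -> Ut^T *m Ut = 1%:M -> LL^T *m LL = 1%:M -> RL^T *m RL = 1%:M ->
  U^T *m Ut = LL *m diag_of cos gam *m RL^T ->
  exists (G : 'M[R]_(n,r)) (K : 'M[R]_r),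
    G = (Ut - U *m (U^T *m Ut)) *m K /\
    Ut = U *m (LL *m diag_of cos gam *m RL^T) + G *m (LL *m diag_of sin gam *m RL^T) /\
    U^T *m G = 0 /\
    (G^T *m G) *m LL *m diag_of sin gam = LL *m diag_of sin gam /\
    G *m (G^T *m G) = G /\
    (G^T *m G) *m (G^T *m G) = G^T *m G.
Proof.
move=> hU hUt hLL hRL hsvd.
have hLL' := mulmx1C hLL; have hRL' := mulmx1C hRL.
set c := diag_of cos gam; set s := diag_of sin gam.
have ec : c = dg (fun i => cos (gam i)) by [].
have es : s = dg (fun i => sin (gam i)) by [].
set Dp := dg (fun i => (sin (gam i))^-1).
set E := dg (fun i => sin (gam i) * (sin (gam i))^-1).
set C := LL *m c *m RL^T.
set M := Ut - U *m (U^T *m Ut).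
have hUM : U^T *m M = 0 by rewrite /M mulmxBr !mulmxA hU mul1mx subrr.
have hMU : M^T *m U = 0 by rewrite -(trmxK U) -trmx_mul hUM trmx0.
have hcs : c *m c + s *m s = 1%:M.
  by rewrite ec es !dgM -dg1 /dg -linearD /=; congr diag_mx; apply/matrixP => i j; rewrite !mxE -!expr2 cos2Dsin2.
have hMM : M^T *m M = RL *m (s *m s) *m RL^T.
  have h0 : M^T *m (U *m (U^T *m Ut)) = 0 by rewrite mulmxA hMU mul0mx.
  transitivity (M^T *m (Ut - U *m (U^T *m Ut))); first by [].
  rewrite mulmxBr h0 subr0 /M linearB /= mulmxBl hUt trmx_mul -(mulmxA _ U^T Ut) hsvd.
  have -> : s *m s = 1%:M - c *m c by rewrite -hcs addrC addKr.
  rewrite mulmxBr mulmxBl mulmx1 hRL'; congr (_ - _).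
  rewrite !trmx_mul trmxK ec dg_tr -ec !mulmxA.
  by rewrite -(mulmxA (RL *m c)) hLL mulmx1.
set N := M *m RL.
have hNN : N^T *m N = s *m s.
  by rewrite /N trmx_mul mulmxA -(mulmxA _ M^T) hMM !mulmxA hRL mul1mx -mulmxA hRL mulmx1.
have hNE : N *m E = N.
  apply/eqP; rewrite -subr_eq0; apply/eqP; rewrite -[X in _ - X](mulmx1 N) -mulmxBr.
  apply: trTT_eq0; rewrite trmx_mul mulmxA -(mulmxA _ N^T) hNN -dg1 /E dgB dg_tr es !dgM.
  apply/matrixP => i j; rewrite !mxE.
  have h : (sin (gam i) / sin (gam i) - 1) * sin (gam i) = 0 by rewrite mulrBl inv_id2 mul1r subrr.
  by rewrite mulrA h !mul0r mul0rn.
set K := RL *m Dp *m LL^T.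
have hDps : Dp *m s = E by rewrite es /Dp dgM; apply: dg_ext => i; rewrite mulrC.
have hP : (M *m K)^T *m (M *m K) = LL *m E *m LL^T.
  rewrite trmx_mul /K !trmx_mul trmxK !mulmxA -(mulmxA _ M^T M) hMM !mulmxA.
  rewrite -(mulmxA _ RL^T RL) hRL mulmx1 -(mulmxA _ RL^T RL) hRL mulmx1.
  congr (_ *m _); rewrite -!mulmxA; congr (_ *m _).
  rewrite /Dp dg_tr es !dgM; apply: dg_ext => i.
  by have [->|h] := eqVneq (sin (gam i)) 0; rewrite ?invr0 ?mul0r // mulfV // mulr1 mulVf.
exists (M *m K), K; split => //; split; [|split; [|split; [|split]]].
- rewrite /K !mulmxA -(mulmxA _ LL^T) hLL mulmx1 -(mulmxA _ Dp) hDps -/N hNE /N -(mulmxA M) hRL' mulmx1.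
  by rewrite /M hsvd !mulmxA addrC subrK.
- by rewrite mulmxA hUM mul0mx.
- rewrite hP -!mulmxA (mulmxA LL^T) hLL mul1mx es /E dgM; congr (_ *m _).
  by apply: dg_ext => i; rewrite inv_id2.
- rewrite hP /K !mulmxA -(mulmxA _ LL^T) hLL mulmx1 -(mulmxA _ Dp) /Dp /E dgM.
  by congr (_ *m _ *m _); apply: dg_ext => i; rewrite mulrA inv_id1.
- rewrite hP -!mulmxA (mulmxA LL^T) hLL mul1mx (mulmxA E) /E dgM; congr (_ *m (_ *m _)).
  by apply: dg_ext => i; rewrite mulrA inv_id2.
Qed.

Lemma trD (R : realType) m p (X Y : 'M[R]_(m, p)) : (X + Y)^T = X^T + Y^T.
Proof. by apply/matrixP => i j; rewrite !mxE. Qed.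
Lemma trN (R : realType) m p (X : 'M[R]_(m, p)) : (- X)^T = - X^T.
Proof. by apply/matrixP => i j; rewrite !mxE. Qed.
Lemma trB (R : realType) m p (X Y : 'M[R]_(m, p)) : (X - Y)^T = X^T - Y^T.
Proof. by rewrite trD trN. Qed.
Lemma trZ (R : realType) m p a (X : 'M[R]_(m, p)) : (a *: X)^T = a *: X^T.
Proof. by apply/matrixP => i j; rewrite !mxE. Qed.

Definition fq {R : realType} {m p : nat} (A : 'M[R]_(m, p)) : R := \tr (A^T *m A).

Lemma fq_sum (R : realType) m p (A : 'M[R]_(m, p)) : fq A = \sum_(i < m) \sum_(j < p) A i j ^+ 2.
Proof.
rewrite /fq /mxtrace exchange_big /=; apply: eq_bigr => j _; rewrite mxE.
by apply: eq_bigr => i _; rewrite mxE expr2.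
Qed.

Lemma fq_ge0 (R : realType) m p (A : 'M[R]_(m, p)) : 0 <= fq A.
Proof. by rewrite fq_sum; apply: sumr_ge0 => i _; apply: sumr_ge0 => j _; exact: sqr_ge0. Qed.

Lemma fnorm_fq (R : realType) m p (A : 'M[R]_(m, p)) : fnorm A = Num.sqrt (fq A).
Proof. by rewrite fq_sum. Qed.

Lemma fnorm_sq (R : realType) m p (A : 'M[R]_(m, p)) : fnorm A ^+ 2 = fq A.
Proof. by rewrite fnorm_fq sqr_sqrtr // fq_ge0. Qed.

Lemma fqD (R : realType) m p (A B : 'M[R]_(m, p)) :
  fq (A + B) = fq A + fq B + 2 * \tr (A^T *m B).
Proof.
rewrite /fq trD mulmxDl !mulmxDr !mxtraceD.
have -> : \tr (B^T *m A) = \tr (A^T *m B) by rewrite -mxtrace_tr trmx_mul trmxK.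
by rewrite mulr2n mulrDl !mul1r; ring.
Qed.

Lemma fqD0 (R : realType) m p (A B : 'M[R]_(m, p)) : A^T *m B = 0 -> fq (A + B) = fq A + fq B.
Proof. by move=> h; rewrite fqD h mxtrace0 mulr0 addr0. Qed.

Lemma fqD0' (R : realType) m p (A B : 'M[R]_(m, p)) : \tr (A^T *m B) = 0 -> fq (A + B) = fq A + fq B.
Proof. by move=> h; rewrite fqD h mulr0 addr0. Qed.

Lemma fqN (R : realType) m p (A : 'M[R]_(m, p)) : fq (- A) = fq A.
Proof. by rewrite /fq trN mulNmx mulmxN opprK. Qed.

Lemma fq_isoL (R : realType) m k p (U : 'M[R]_(m, k)) (M : 'M[R]_(k, p)) :
  U^T *m U = 1%:M -> fq (U *m M) = fq M.
Proof. by move=> h; rewrite /fq trmx_mul -mulmxA (mulmxA U^T) h mul1mx. Qed.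

Lemma fq_isoR (R : realType) m k p (V : 'M[R]_(p, k)) (M : 'M[R]_(m, k)) :
  V^T *m V = 1%:M -> fq (M *m V^T) = fq M.
Proof.
move=> h; rewrite /fq trmx_mul trmxK mxtrace_mulC !mulmxA -(mulmxA M V^T V) h mulmx1.
by rewrite mxtrace_mulC.
Qed.

Lemma PT_decomp (R : realType) n r (U V GU GV : 'M[R]_(n,r)) (CU SU CV SV : 'M[R]_r) :
  U^T *m U = 1%:M -> V^T *m V = 1%:M -> U^T *m GU = 0 -> V^T *m GV = 0 ->
  PT U V ((U *m CU + GU *m SU) *m (V *m CV + GV *m SV)^T) =
    U *m (CU *m CV^T) *m V^T + U *m (CU *m SV^T) *m GV^T + GU *m (SU *m CV^T) *m V^T /\
  PTperp U V ((U *m CU + GU *m SU) *m (V *m CV + GV *m SV)^T) =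
    GU *m (SU *m SV^T) *m GV^T.
Proof.
move=> hU hV hUG hVG.
have hGV : GV^T *m V = 0 by rewrite -(trmxK V) -trmx_mul hVG trmx0.
set T1 := U *m (CU *m CV^T) *m V^T; set T2 := U *m (CU *m SV^T) *m GV^T.
set T3 := GU *m (SU *m CV^T) *m V^T; set T4 := GU *m (SU *m SV^T) *m GV^T.
have eX : (U *m CU + GU *m SU) *m (V *m CV + GV *m SV)^T = T1 + T2 + T3 + T4.
  rewrite trD !trmx_mul mulmxDl !mulmxDr /T1 /T2 /T3 /T4 !mulmxA.
  by rewrite !addrA.
have hL : U *m U^T *m (T1 + T2 + T3 + T4) = T1 + T2.
  rewrite /T1 /T2 /T3 /T4 !mulmxDr !mulmxA -!(mulmxA U U^T U) -!(mulmxA U U^T GU) hU hUG.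
  by rewrite !mulmx1 !mulmx0 !mul0mx !addr0.
have hR : (T1 + T2 + T3 + T4) *m V *m V^T = T1 + T3.
  rewrite /T1 /T2 /T3 /T4 !mulmxDl -!mulmxA !(mulmxA V^T V) !(mulmxA GV^T V) hV hGV.
  rewrite !mul1mx !mul0mx !mulmx0 addr0 addr0; congr (_ + _).
have hLR : U *m U^T *m (T1 + T2 + T3 + T4) *m V *m V^T = T1.
  rewrite hL /T1 /T2 !mulmxDl -!mulmxA !(mulmxA V^T V) !(mulmxA GV^T V) hV hGV.
  by rewrite !mul1mx !mul0mx !mulmx0 addr0.
have hPT : PT U V (T1 + T2 + T3 + T4) = T1 + T2 + T3.
  rewrite /PT hLR hL hR.
  by rewrite [T1 + T3]addrC addrA addrK.
rewrite eX; split => //.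
by rewrite /PTperp hPT addrC addKr.
Qed.

Lemma qf_col (R : realType) n k (A : 'M[R]_(n, k)) i :
  qf (A^T *m delta_mx i 0) = \sum_(j < k) A i j ^+ 2.
Proof.
apply: eq_bigr => j _; congr (_ ^+ 2); rewrite mxE (bigD1 i) //= !mxE !eqxx mulr1 big1 ?addr0 // => l hl.
by rewrite !mxE (negPf hl) mulr0.
Qed.

Lemma lev_bound (R : realType) n r du (U G : 'M[R]_(n,r)) (BU : 'M[R]_(n,du)) i :
  U^T *m U = 1%:M -> U^T *m G = 0 -> G *m (G^T *m G) = G ->
  BU^T *m BU = 1%:M -> BU *m BU^T *m U = U -> BU *m BU^T *m G = G -> (du <= 2 * r)%N ->
  0 < lev U i ->
  Num.sqrt (n%:R / (lev U i * r%:R)) * vnorm (U^T *m delta_mx i 0) = 1 /\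
  Num.sqrt (n%:R / (lev U i * r%:R)) * vnorm (G^T *m delta_mx i 0) <= Num.sqrt (2 * (lev BU i / lev U i)).
Proof.
move=> hU hUG hGP hBU hPU hPG hdu hlev.
set e : 'cV[R]_n := delta_mx i 0.
set SU := \sum_(j < r) U i j ^+ 2.
set SB := \sum_(j < du) BU i j ^+ 2.
have hSU0 : 0 <= SU by apply: sumr_ge0 => j _; exact: sqr_ge0.
have hSB0 : 0 <= SB by apply: sumr_ge0 => j _; exact: sqr_ge0.
have elev : lev U i = n%:R / r%:R * SU by [].
have elevB : lev BU i = n%:R / du%:R * SB by [].
have hn : 0 < n%:R :> R.
  rewrite lt_def ler0n andbT; apply/negP => /eqP h0; move: hlev; by rewrite elev h0 !mul0r ltxx.
have hr : 0 < r%:R :> R.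
  rewrite lt_def ler0n andbT; apply/negP => /eqP h0; move: hlev; by rewrite elev h0 invr0 mulr0 mul0r ltxx.
have hSU : 0 < SU.
  rewrite lt_def hSU0 andbT; apply/negP => /eqP h0; move: hlev; by rewrite elev h0 mulr0 ltxx.
have hqU : qf (U^T *m e) = SU by rewrite qf_col.
have hqB : qf (BU^T *m e) = SB by rewrite qf_col.
have ha0 : 0 <= n%:R / (lev U i * r%:R) :> R by rewrite divr_ge0 // ?ler0n // mulr_ge0 // ltW.
split.
  rewrite vnormE hqU -sqrtrM // elev -[1]sqrtr1; congr Num.sqrt.
  field; rewrite !gt_eqF //.
set K := U *m U^T + G *m G^T.
have hGU : G^T *m U = 0 by rewrite -(trmxK U) -trmx_mul hUG trmx0.
have hKs : K^T = K by rewrite /K trD !trmx_mul !trmxK.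
have hKi : K *m K = K.
  rewrite /K mulmxDl !mulmxDr !mulmxA -!(mulmxA U U^T U) -(mulmxA U U^T G) -(mulmxA G G^T U).
  by rewrite hU hUG hGU -(mulmxA G G^T G) hGP !mulmx1 !mulmx0 !mul0mx addr0 add0r.
have hPK : BU *m BU^T *m K = K by rewrite /K mulmxDr !mulmxA hPU hPG.
have hKP : K *m (BU *m BU^T) = K.
  transitivity ((BU *m BU^T *m K)^T); first by rewrite trmx_mul hKs trmx_mul trmxK.
  by rewrite hPK hKs.
have hdpK : dp e (K *m e) = qf (U^T *m e) + qf (G^T *m e).
  by rewrite /K mulmxDl dpDr -!mulmxA (dp_mul U) (dp_mul G) !qf_dp.
have hq : qf (U^T *m e) + qf (G^T *m e) <= SB.
  rewrite -hdpK dp_proj // -hKP -mulmxA -hqB.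
  apply: le_trans (qf_proj _ hKs hKi) _.
  by rewrite -mulmxA qf_mul hBU mul1mx qf_dp.
have hqG : qf (G^T *m e) <= SB by have := qf_ge0 (U^T *m e); lra.
have hlB : 0 <= lev BU i by rewrite elevB mulr_ge0 // divr_ge0 // ler0n.
rewrite vnormE -sqrtrM // ler_sqrt; last by rewrite mulr_ge0 // divr_ge0 // ltW.
apply: le_trans (ler_wpM2l ha0 hqG) _.
rewrite elevB elev.
have [du0|dupos] := eqVneq du 0%N.
  have -> : SB = 0 by rewrite /SB; move: (BU); rewrite du0 => BU'; rewrite big_ord0.
  by rewrite !mulr0 mul0r mulr0.
have hdu' : 0 < du%:R :> R by rewrite ltr0n lt0n.
have hdr : du%:R <= 2 * r%:R :> R by rewrite -natrM ler_nat.
have e1 : n%:R / (n%:R / r%:R * SU * r%:R) * SB = SB / SU by field; rewrite !gt_eqF.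
have e2 : 2 * (n%:R / du%:R * SB / (n%:R / r%:R * SU)) = (2 * r%:R / du%:R) * (SB / SU).
  by field; rewrite !gt_eqF.
rewrite e1 e2; apply: ler_peMl; first by rewrite divr_ge0 // ltW.
by rewrite ler_pdivlMr // mul1r.
Qed.

Lemma vnorm_le_qf (R : realType) p q (x : 'cV[R]_p) (y : 'cV[R]_q) : qf x <= qf y -> vnorm x <= vnorm y.
Proof. by move=> h; rewrite !vnormE ler_sqrt ?qf_ge0. Qed.

Lemma PGsym (R : realType) n r (G : 'M[R]_(n, r)) : (G^T *m G)^T = G^T *m G.
Proof. by rewrite trmx_mul trmxK. Qed.

Lemma vnorm_G (R : realType) n r (G : 'M[R]_(n, r)) w :
  (G^T *m G) *m (G^T *m G) = G^T *m G -> vnorm (G *m w) <= vnorm w.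
Proof.
move=> hi; apply: vnorm_le_qf; rewrite qf_mul dp_proj ?PGsym //; exact: qf_proj (PGsym G) hi.
Qed.

Lemma vnorm_G_eq (R : realType) n r (G : 'M[R]_(n, r)) w :
  (G^T *m G) *m w = w -> vnorm (G *m w) = vnorm w.
Proof. by move=> h; rewrite !vnormE qf_mul h qf_dp. Qed.

Lemma vnorm_GT (R : realType) n r (G : 'M[R]_(n, r)) x :
  G *m (G^T *m G) = G -> vnorm (G^T *m x) <= vnorm x.
Proof.
move=> h; apply: vnorm_le_qf; rewrite qf_mul trmxK.
have hs : (G *m G^T)^T = G *m G^T by rewrite trmx_mul trmxK.
have hi : (G *m G^T) *m (G *m G^T) = G *m G^T by rewrite -mulmxA (mulmxA G^T) mulmxA h.
rewrite dp_proj //; exact: qf_proj hs hi.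
Qed.

Lemma spec_sandwich (R : realType) n r (G1 G2 : 'M[R]_(n, r)) (B : 'M[R]_r) :
  (G1^T *m G1) *m (G1^T *m G1) = G1^T *m G1 -> G2 *m (G2^T *m G2) = G2 ->
  (G2^T *m G2) *m (G2^T *m G2) = G2^T *m G2 ->
  (G1^T *m G1) *m B = B -> B *m (G2^T *m G2) = B ->
  specnorm (G1 *m B *m G2^T) = specnorm B.
Proof.
move=> h1 h2 h2' hB1 hB2; apply/eqP; rewrite eq_le; apply/andP; split.
  apply: spec_le => x hx; exists (G2^T *m x); split.
    exact: le_trans (vnorm_GT _ h2) hx.
  by rewrite -!mulmxA vnorm_G.
apply: spec_le => z hz; exists (G2 *m z); split.
  exact: le_trans (vnorm_G _ h2') hz.
rewrite -!mulmxA (mulmxA G2^T) (mulmxA B) hB2 (vnorm_G_eq (G := G1)) //.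
by rewrite mulmxA hB1.
Qed.

Lemma span_facts (R : realType) n r du (U Ut : 'M[R]_(n, r)) (BU : 'M[R]_(n, du)) :
  BU^T *m BU = 1%:M -> (BU^T == (row_mx U Ut)^T)%MS ->
  BU *m BU^T *m U = U /\ BU *m BU^T *m Ut = Ut /\ (du <= 2 * r)%N.
Proof.
move=> hB /andP [h1 h2]; rewrite tr_row_mx in h1 h2.
move: h2; rewrite col_mx_sub => /andP [hU hUt].
have key : forall X : 'M[R]_(n, r), (X^T <= BU^T)%MS -> BU *m BU^T *m X = X.
  move=> X /submxP [D eD].
  by rewrite -(trmxK X) eD trmx_mul trmxK mulmxA -(mulmxA BU) hB mulmx1.
split; first exact: key.
split; first exact: key.
have := mxrankM_maxl BU^T BU; rewrite hB mxrank1 => h.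
apply: leq_trans h _; apply: leq_trans (mxrankS h1) _.
by rewrite mul2n -addnn rank_leq_row.
Qed.

Lemma le_bigmax0 (R : realType) n (F : 'I_n -> R) i : F i <= \big[Num.max/0]_(j < n) F j.
Proof. by rewrite (bigD1 i) //= le_max lexx. Qed.

Lemma bigmax_le0 (R : realType) n (F : 'I_n -> R) c :
  0 <= c -> (forall i, F i <= c) -> \big[Num.max/0]_(j < n) F j <= c.
Proof.
move=> h0 h; apply: (big_ind (fun x => x <= c)) => //.
  by move=> x y hx hy; rewrite ge_max hx hy.

Qed.

Lemma entry_dp (R : realType) n (W : 'M[R]_n) i j :
  W i j = dp (delta_mx i 0) (W *m delta_mx j 0).
Proof.
rewrite /dp mxE (bigD1 i) //= big1 => [|k hk]; last by rewrite !mxE (negPf hk) mul0r.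
rewrite addr0 !mxE !eqxx mul1r (bigD1 j) //= big1 => [|k hk]; last by rewrite !mxE (negPf hk) mulr0.
by rewrite addr0 !mxE !eqxx mulr1.
Qed.
Lemma fq_GL (R : realType) n r p (G : 'M[R]_(n, r)) (Z : 'M[R]_(r, p)) :
  (G^T *m G) *m Z = Z -> fq (G *m Z) = fq Z.
Proof. by move=> h; rewrite /fq trmx_mul -mulmxA (mulmxA G^T) h. Qed.

Lemma fq_GR (R : realType) n r p (G : 'M[R]_(n, r)) (Y : 'M[R]_(p, r)) :
  Y *m (G^T *m G) = Y -> fq (Y *m G^T) = fq Y.
Proof.
move=> h; rewrite /fq trmx_mul trmxK mxtrace_mulC !mulmxA -(mulmxA Y G^T G) h.
by rewrite mxtrace_mulC.
Qed.

Lemma key1 (R : realType) (a N u1 u2 u3 sX sY sZ b : R) :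
  0 <= a -> 0 <= u1 -> 0 <= u2 -> 0 <= u3 -> 0 <= sX -> 0 <= sY -> 0 <= sZ -> 1 <= b ->
  a * u1 <= 1 -> a * u2 <= b -> a * u3 <= b -> N <= sX * u1 + sY * u2 + sZ * u3 ->
  a * N <= (sX + sZ + sY) * b.
Proof.
move=> ha h1 h2 h3 hX hY hZ hb e1 e2 e3 hN.
apply: le_trans (ler_wpM2l ha hN) _.
have -> : a * (sX * u1 + sY * u2 + sZ * u3) = sX * (a * u1) + sY * (a * u2) + sZ * (a * u3) by ring.
have t1 : sX * (a * u1) <= sX * b by apply: ler_wpM2l => //; lra.
have t2 : sY * (a * u2) <= sY * b by apply: ler_wpM2l.
have t3 : sZ * (a * u3) <= sZ * b by apply: ler_wpM2l.
rewrite !mulrDl; lra.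
Qed.

Lemma key2 (R : realType) (a c N u g v gv sX sY sZ b : R) :
  0 <= a -> 0 <= c -> 0 <= u -> 0 <= g -> 0 <= v -> 0 <= gv -> 0 <= sX -> 0 <= sY -> 0 <= sZ -> 1 <= b ->
  a * u = 1 -> c * v = 1 -> a * g <= b -> c * gv <= b ->
  N <= u * sX * v + u * sY * gv + g * sZ * v ->
  a * N * c <= (sX + sZ + sY) * b.
Proof.
move=> ha hc hu hg hv hgv hX hY hZ hb e1 e2 e3 e4 hN.
have hac : 0 <= a * c by apply: mulr_ge0.
rewrite mulrAC; apply: le_trans (ler_wpM2l hac hN) _.
have -> : a * c * (u * sX * v + u * sY * gv + g * sZ * v) =
  sX * ((a * u) * (c * v)) + sY * (a * u) * (c * gv) + sZ * (a * g) * (c * v) by ring.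
rewrite e1 e2 !mulr1.
have t1 : sX <= sX * b by rewrite -{1}(mulr1 sX); apply: ler_wpM2l.
have t2 : sY * (c * gv) <= sY * b by apply: ler_wpM2l.
have t3 : sZ * (a * g) <= sZ * b by apply: ler_wpM2l.
rewrite !mulrDl; lra.
Qed.

Lemma lev_ge0 (R : realType) n d (S : 'M[R]_(n, d)) i : 0 <= lev S i.
Proof. by rewrite /lev mulr_ge0 // ?divr_ge0 ?ler0n // sumr_ge0 // => k _; exact: sqr_ge0. Qed.

Local Close Scope classical_set_scope.
Local Open Scope ring_scope.
Unset Implicit Arguments.

Theorem lemma8 (R : realType) (n r : nat) (hn : (2 * r <= n)%N)
  (Xs : 'M[R]_n) (U V Ut Vt : 'M[R]_(n, r))
  (hrank : \rank Xs = r)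
  (hcol : (Xs^T == U^T)%MS) (hrow : (Xs == V^T)%MS)
  (hU : U^T *m U = 1%:M) (hV : V^T *m V = 1%:M)
  (hUt : Ut^T *m Ut = 1%:M) (hVt : Vt^T *m Vt = 1%:M)
  (LL RL LR RR : 'M[R]_r)
  (hLL : LL^T *m LL = 1%:M) (hRL : RL^T *m RL = 1%:M)
  (hLR : LR^T *m LR = 1%:M) (hRR : RR^T *m RR = 1%:M)
  (gam eta : 'I_r -> R)
  (hgam : forall k, 0 <= gam k <= pi / 2) (heta : forall k, 0 <= eta k <= pi / 2)
  (hsvdU : U^T *m Ut = LL *m diag_of cos gam *m RL^T)
  (hsvdV : V^T *m Vt = LR *m diag_of cos eta *m RR^T)
  (hmu : forall i, 0 < lev U i) (hnu : forall j, 0 < lev V j)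
  (du dv : nat) (BU : 'M[R]_(n, du)) (BV : 'M[R]_(n, dv))
  (hBU : BU^T *m BU = 1%:M) (hBUs : (BU^T == (row_mx U Ut)^T)%MS)
  (hBV : BV^T *m BV = 1%:M) (hBVs : (BV^T == (row_mx V Vt)^T)%MS)
  (lam : R) (hlam : 0 <= lam) :
  let Acc := LL *m diag_of cos gam *m RL^T *m RR *m diag_of cos eta *m LR^T in
  let Acs := LL *m diag_of cos gam *m RL^T *m RR *m diag_of sin eta *m LR^T in
  let Asc := LL *m diag_of sin gam *m RL^T *m RR *m diag_of cos eta *m LR^T in
  let Ass := LL *m diag_of sin gam *m RL^T *m RR *m diag_of sin eta *m LR^T in
  let W0 := U *m V^T - lam *: PT U V (Ut *m Vt^T) in
  let alpha1 := Num.sqrt (fnorm (1%:M - lam *: Acc) ^+ 2 + fnorm (lam *: Acs) ^+ 2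
                          + fnorm (lam *: Asc) ^+ 2) in
  let alpha2 := specnorm (lam *: Ass) in
  let alpha3 := specnorm (1%:M - lam *: Acc) + specnorm (lam *: Asc)
                + specnorm (lam *: Acs) in
  let beta := Num.max 1 (Num.max
                (Num.sqrt (2 * \big[Num.max/0]_(i < n) (lev BU i / lev U i)))
                (Num.sqrt (2 * \big[Num.max/0]_(j < n) (lev BV j / lev V j)))) in
  [/\ fnorm W0 = alpha1,
      specnorm (lam *: PTperp U V (Ut *m Vt^T)) = alpha2,
      mu_inf2_norm U V W0 <= alpha3 * beta
    & mu_inf_norm U V W0 <= alpha3 * beta].
Proof.
move=> Acc Acs Asc Ass W0 alpha1 alpha2 alpha3 beta.
have [GU [KU [eGU [eUt [hUG [hPU [hGPU hPPU]]]]]]] := side_decomp hU hUt hLL hRL hsvdU.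
have [GV [KV [eGV [eVt [hVG [hPV [hGPV hPPV]]]]]]] := side_decomp hV hVt hLR hRR hsvdV.
set cg := diag_of cos gam in eUt hPU; set sg := diag_of sin gam in eUt hPU.
set ch := diag_of cos eta in eVt hPV; set sh := diag_of sin eta in eVt hPV.
set CU := LL *m cg *m RL^T in eUt; set SU := LL *m sg *m RL^T in eUt.
set CV := LR *m ch *m RR^T in eVt; set SV := LR *m sh *m RR^T in eVt.
have [ePT ePTp] := PT_decomp CU SU CV SV hU hV hUG hVG.
rewrite -eUt -eVt in ePT ePTp.
have hchT : ch^T = ch by exact: tr_diag_mx.
have hshT : sh^T = sh by exact: tr_diag_mx.
have hAcc : CU *m CV^T = Acc by rewrite /CV !trmx_mul trmxK hchT !mulmxA.
have hAcs : CU *m SV^T = Acs by rewrite /SV !trmx_mul trmxK hshT !mulmxA.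
have hAsc : SU *m CV^T = Asc by rewrite /CV !trmx_mul trmxK hchT !mulmxA.
have hAss : SU *m SV^T = Ass by rewrite /SV !trmx_mul trmxK hshT !mulmxA.
rewrite hAcc hAcs hAsc in ePT; rewrite hAss in ePTp.
set X1 := 1%:M - lam *: Acc; set Y := lam *: Acs; set Z := lam *: Asc.
have hW : W0 = U *m X1 *m V^T - U *m Y *m GV^T - GU *m Z *m V^T.
  by rewrite /W0 ePT /X1 /Y /Z mulmxBr mulmx1 mulmxBl -!scalemxAr -!scalemxAl !scalerDr !opprD !addrA.
have hGV : GV^T *m V = 0 by rewrite -(trmxK V) -trmx_mul hVG trmx0.
have hVs : sh *m (LR^T *m (GV^T *m GV)) = sh *m LR^T.
  by have := congr1 trmx hPV; rewrite !trmx_mul trmxK hshT.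
have hYP : Y *m (GV^T *m GV) = Y by rewrite /Y -scalemxAl /Acs -!mulmxA hVs.
have hZP : (GU^T *m GU) *m Z = Z by rewrite /Z -scalemxAr /Asc !mulmxA hPU.
have hBU1 : (GU^T *m GU) *m (lam *: Ass) = lam *: Ass by rewrite -scalemxAr /Ass !mulmxA hPU.
have hBV1 : (lam *: Ass) *m (GV^T *m GV) = lam *: Ass by rewrite -scalemxAl /Ass -!mulmxA hVs.
have part1 : fnorm W0 = alpha1.
  rewrite /alpha1 !fnorm_sq fnorm_fq; congr Num.sqrt.
  have eA : U *m X1 *m V^T - U *m Y *m GV^T = U *m (X1 *m V^T - Y *m GV^T) by rewrite [RHS]mulmxBr !mulmxA.
  rewrite hW eA fqD0; last first.
    by rewrite trmx_mul mulmxN !mulmxA -(mulmxA _ U^T GU) hUG mulmx0 !mul0mx oppr0.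
  rewrite fqN fq_isoL // fq_isoR // fq_GL // fqD0'; last first.
    rewrite trmx_mul trmxK mulmxN raddfN /= !mulmxA mxtrace_mulC !mulmxA hGV.
    by rewrite !mul0mx mxtrace0 oppr0.
  by rewrite fqN fq_GR // fq_isoR.
have part2 : specnorm (lam *: PTperp U V (Ut *m Vt^T)) = alpha2.
  by rewrite ePTp scalemxAl scalemxAr spec_sandwich.
have [hPBU [hPBUt hdu]] := span_facts hBU hBUs.
have [hPBV [hPBVt hdv]] := span_facts hBV hBVs.
have hPBGU : BU *m BU^T *m GU = GU.
  by rewrite eGU mulmxA mulmxBr hPBUt !mulmxA hPBU.
have hPBGV : BV *m BV^T *m GV = GV.
  by rewrite eGV mulmxA mulmxBr hPBVt !mulmxA hPBV.
have hb1 : 1 <= beta by rewrite /beta le_max lexx.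
have hbU : forall i, Num.sqrt (2 * (lev BU i / lev U i)) <= beta.
  move=> i; rewrite /beta !le_max; apply/orP; right; apply/orP; left.
  have h0 : 0 <= lev BU i / lev U i by rewrite divr_ge0 // lev_ge0.
  have h1 := le_bigmax0 (fun i => lev BU i / lev U i) i.
  rewrite ler_sqrt; last by rewrite mulr_ge0 //; apply: le_trans h1.
  by rewrite ler_pM2l.
have hbV : forall j, Num.sqrt (2 * (lev BV j / lev V j)) <= beta.
  move=> j; rewrite /beta !le_max; apply/orP; right; apply/orP; right.
  have h0 : 0 <= lev BV j / lev V j by rewrite divr_ge0 // lev_ge0.
  have h1 := le_bigmax0 (fun j => lev BV j / lev V j) j.
  rewrite ler_sqrt; last by rewrite mulr_ge0 //; apply: le_trans h1.
  by rewrite ler_pM2l.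
have LU : forall i : 'I_n, (Num.sqrt (n%:R / (lev U i * r%:R)) * vnorm (U^T *m delta_mx i 0) = 1) /\ (Num.sqrt (n%:R / (lev U i * r%:R)) * vnorm (GU^T *m delta_mx i 0) <= beta).
  move=> i; have [h1 h2] := lev_bound (i := i) hU hUG hGPU hBU hPBU hPBGU hdu (hmu i).
  by split => //; apply: le_trans h2 (hbU i).
have LV : forall j : 'I_n, (Num.sqrt (n%:R / (lev V j * r%:R)) * vnorm (V^T *m delta_mx j 0) = 1) /\ (Num.sqrt (n%:R / (lev V j * r%:R)) * vnorm (GV^T *m delta_mx j 0) <= beta).
  move=> j; have [h1 h2] := lev_bound (i := j) hV hVG hGPV hBV hPBV hPBGV hdv (hnu j).
  by split => //; apply: le_trans h2 (hbV j).
have sX0 := spec_ge0 X1; have sY0 := spec_ge0 Y; have sZ0 := spec_ge0 Z.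
have ha3 : alpha3 = specnorm X1 + specnorm Z + specnorm Y by [].
have hab0 : 0 <= alpha3 * beta by rewrite ha3 mulr_ge0 ?addr_ge0 // (le_trans ler01 hb1).
have rowb : forall i : 'I_n, Num.sqrt (n%:R / (lev U i * r%:R)) * vnorm (W0^T *m delta_mx i 0) <= alpha3 * beta.
  move=> i; have [h1 h2] := LU i.
  set e : 'cV[R]_n := delta_mx i 0 in h1 h2 *.
  have eWT : W0^T *m e = V *m (X1^T *m (U^T *m e)) - GV *m (Y^T *m (U^T *m e)) - V *m (Z^T *m (GU^T *m e)).
    by rewrite hW trB trB !trmx_mul !trmxK !mulmxBl -!mulmxA.
  rewrite ha3; apply: (key1 (u1 := vnorm (U^T *m e)) (u2 := vnorm (U^T *m e)) (u3 := vnorm (GU^T *m e)));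
    rewrite ?sqrtr_ge0 ?vnorm_ge0 ?h1 ?hb1 //.
  rewrite eWT; apply: le_trans (vnorm_sub _ _) _; apply: lerD; first (apply: le_trans (vnorm_sub _ _) _; apply: lerD).
  - by rewrite vnorm_isom //; exact: spec_tr.
  - by apply: le_trans (vnorm_G _ hPPV) _; exact: spec_tr.
  - by rewrite vnorm_isom //; exact: spec_tr.
have colb : forall j : 'I_n, Num.sqrt (n%:R / (lev V j * r%:R)) * vnorm (W0 *m delta_mx j 0) <= alpha3 * beta.
  move=> j; have [h1 h2] := LV j.
  set e : 'cV[R]_n := delta_mx j 0 in h1 h2 *.
  have eW : W0 *m e = U *m (X1 *m (V^T *m e)) - U *m (Y *m (GV^T *m e)) - GU *m (Z *m (V^T *m e)).
    by rewrite hW mulmxBl mulmxBl -!mulmxA.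
  rewrite ha3; apply: (key1 (u1 := vnorm (V^T *m e)) (u2 := vnorm (GV^T *m e)) (u3 := vnorm (V^T *m e)));
    rewrite ?sqrtr_ge0 ?vnorm_ge0 ?h1 ?hb1 //.
  rewrite eW; apply: le_trans (vnorm_sub _ _) _; apply: lerD; first (apply: le_trans (vnorm_sub _ _) _; apply: lerD).
  - by rewrite vnorm_isom //; exact: spec_mul.
  - by rewrite vnorm_isom //; exact: spec_mul.
  - by apply: le_trans (vnorm_G _ hPPU) _; exact: spec_mul.
have entb : forall i j : 'I_n, Num.sqrt (n%:R / (lev U i * r%:R)) * `|W0 i j| * Num.sqrt (n%:R / (lev V j * r%:R)) <= alpha3 * beta.
  move=> i j; have [h1 h2] := LU i; have [h3 h4] := LV j.
  set e : 'cV[R]_n := delta_mx i 0 in h1 h2 *.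
  set f : 'cV[R]_n := delta_mx j 0 in h3 h4 *.
  have eW : W0 *m f = U *m (X1 *m (V^T *m f)) - U *m (Y *m (GV^T *m f)) - GU *m (Z *m (V^T *m f)).
    by rewrite hW mulmxBl mulmxBl -!mulmxA.
  rewrite ha3; apply: (key2 (u := vnorm (U^T *m e)) (g := vnorm (GU^T *m e)) (v := vnorm (V^T *m f)) (gv := vnorm (GV^T *m f)));
    rewrite ?sqrtr_ge0 ?vnorm_ge0 //.
  rewrite entry_dp -/e -/f eW !dpDr !dpNr !(dp_mul U) (dp_mul GU).
  apply: le_trans (ler_normB _ _) _; apply: lerD; first (apply: le_trans (ler_normB _ _) _; apply: lerD).
  - by apply: le_trans (CS_abs _ _) _; rewrite -mulrA; apply: ler_wpM2l; [exact: vnorm_ge0 | exact: spec_mul].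
  - by apply: le_trans (CS_abs _ _) _; rewrite -mulrA; apply: ler_wpM2l; [exact: vnorm_ge0 | exact: spec_mul].
  - by apply: le_trans (CS_abs _ _) _; rewrite -mulrA; apply: ler_wpM2l; [exact: vnorm_ge0 | exact: spec_mul].
split => //.
- rewrite /mu_inf2_norm ge_max; apply/andP; split; apply: bigmax_le0 => // i.
- rewrite /mu_inf_norm; apply: bigmax_le0 => // i; apply: bigmax_le0 => // j; exact: entb.
Qed.
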